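(* There exists a Heffter array $H(n;k)$ for all $n\equiv 1,3 \pmod 4$ and $k\equiv 2\pmod 4$ with $n>k\ge 6$.
   Context: A Heffter array $H(n;k)$ is an $n\times n$ array in which some cells are filled with nonzero integers and the others are empty, such that: each row and each column contains exactly $k$ filled cells; the entries of every row and of every column sum to $0$ modulo $2nk+1$; and for each integer $1\le x\le nk$, exactly one of $x$ or $-x$ appears in the array, and it appears exactly once. *)

(* Defs.v *)
From mathcomp Require Import all_boot all_order all_algebra.
Set Implicit Arguments. Unset Strict Implicit. Unset Printing Implicit Defensive.
Import GRing.Theory Num.Theory.
Local Open Scope ring_scope.

(* A partially filled n x n array of integers: None = empty cell. *)
Definition parray (n : nat) := 'I_n -> 'I_n -> option int.

Definition filled n (A : parray n) (i j : 'I_n) : bool := A i j != None.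

Definition entry n (A : parray n) (i j : 'I_n) : int := odflt 0 (A i j).

Definition is_heffter (n k : nat) (A : parray n) : Prop :=
  (forall i j, A i j != Some 0) /\
  (forall i : 'I_n, #|[set j | filled A i j]| = k) /\
  (forall j : 'I_n, #|[set i | filled A i j]| = k) /\
  (forall i : 'I_n, ((\sum_(j < n) entry A i j) %% (2 * n * k + 1)%:Z)%Z = 0) /\
  (forall j : 'I_n, ((\sum_(i < n) entry A i j) %% (2 * n * k + 1)%:Z)%Z = 0) /\
  (forall x : nat, (1 <= x <= n * k)%N ->
     #|[set ij : 'I_n * 'I_n | (A ij.1 ij.2 == Some x%:Z) || (A ij.1 ij.2 == Some (- x%:Z))]| = 1%N).
Arguments is_heffter : clear implicits.

(* Main.v *)
Require Import Defs.
From mathcomp Require Import all_boot all_order all_algebra.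
From mathcomp Require Import zify.
Set Implicit Arguments. Unset Strict Implicit. Unset Printing Implicit Defensive.
Import GRing.Theory Num.Theory.

Definition tt (k r : nat) : nat :=
  if k - 6 <= r then nth 0 [:: 4;4;3;3;0;0] (r - (k-6)) else nth 0 [:: 2;2;0;0] (r %% 4).
Definition dg (k r : nat) : nat := if r == k.-1 then k else r.
Definition eps (k r : nat) : int :=
  if k - 6 <= r then nth 0%R [:: 1;-1;1;-1;-1;1]%R (r - (k-6))
  else nth 0%R [:: 1;-1;-1;1]%R (r %% 4).
Definition sgw (k r : nat) : int := if r == k.-1 then 1%R else (-1)%R.
Definition absv (n k r j : nat) : nat := if r == k.-1 then r*n + 1 + j else r.+1 * n - j.

Lemma mod4 q s : s < 4 -> (4*q+s) %% 4 = s. Proof. move=> h; lia. Qed.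
Lemma mod40 q : (4*q) %% 4 = 0. Proof. lia. Qed.

Lemma sum4 (G : nat -> int) a :
  (\sum_(a <= r < a+4) G r = G a + G (a+1)%N + G (a+2)%N + G (a+3)%N)%R.
Proof.
rewrite !addnS addn0.
do 4 (rewrite big_ltn; last by lia).
by rewrite big_geq // addr0 !addrA.
Qed.

Lemma sum6 (G : nat -> int) a :
  (\sum_(a <= r < a+6) G r = G a + G (a+1)%N + G (a+2)%N + G (a+3)%N + G (a+4)%N + G (a+5)%N)%R.
Proof.
rewrite !addnS addn0.
do 6 (rewrite big_ltn; last by lia).
by rewrite big_geq // addr0 !addrA.
Qed.


Lemma epsZ p r : r < 4 * p -> eps (4 * p+6) r = nth 0%R [:: 1;-1;-1;1]%R (r %% 4).
Proof. by move=> h; rewrite /eps addnK leqNgt h. Qed.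
Lemma ttZ p r : r < 4 * p -> tt (4 * p+6) r = nth 0 [:: 2;2;0;0] (r %% 4).
Proof. by move=> h; rewrite /tt addnK leqNgt h. Qed.
Lemma sgwZ p r : r < 4 * p -> sgw (4 * p+6) r = (-1)%R.
Proof. by move=> h; rewrite /sgw; case: eqP => //; lia. Qed.
Lemma absvZ n p r j : r < 4 * p -> absv n (4 * p+6) r j = r.+1 * n - j.
Proof. by move=> h; rewrite /absv; case: eqP => //; lia. Qed.
Lemma dgZ p r : r < 4 * p -> dg (4 * p+6) r = r.
Proof. by move=> h; rewrite /dg; case: eqP => //; lia. Qed.

Lemma epsS p s : s < 6 -> eps (4 * p+6) (4 * p+s) = nth 0%R [:: 1;-1;1;-1;-1;1]%R s.
Proof. by move=> h; rewrite /eps addnK leq_addr addKn. Qed.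
Lemma ttS p s : s < 6 -> tt (4 * p+6) (4 * p+s) = nth 0 [:: 4;4;3;3;0;0] s.
Proof. by move=> h; rewrite /tt addnK leq_addr addKn. Qed.
Lemma sgwS p s : s < 6 -> sgw (4 * p+6) (4 * p+s) = if s == 5 then 1%R else (-1)%R.
Proof. by move=> h; rewrite /sgw; do 2 case: eqP => //; lia. Qed.
Lemma absvS n p s j : s < 6 -> absv n (4 * p+6) (4 * p+s) j =
   if s == 5 then (4 * p+s)*n + 1 + j else (4 * p+s).+1 * n - j.
Proof. by move=> h; rewrite /absv; do 2 case: eqP => //; lia. Qed.
Lemma dgS p s : s < 6 -> dg (4 * p+6) (4 * p+s) = if s == 5 then 4 * p+6 else 4 * p+s.
Proof. by move=> h; rewrite /dg; do 2 case: eqP => //; lia. Qed.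

Lemma sumG n p (f : nat -> nat) :
  (forall r, f r < n) ->
  (forall q, q < p -> f (4*q) + f (4*q+3) = f (4*q+1) + f (4*q+2)) ->
  f (4 * p) + f (4 * p+2) + f (4 * p+5) = f (4 * p+1) + f (4 * p+3) + f (4 * p+4) ->
  (\sum_(0 <= r < 4 * p+6) (eps (4 * p+6) r * sgw (4 * p+6) r * (absv n (4 * p+6) r (f r))%:Z)
     = (2*n*(4 * p+6)+1)%:Z)%R.
Proof.
move=> fb hz hs.
set G := fun r => (eps (4 * p+6) r * sgw (4 * p+6) r * (absv n (4 * p+6) r (f r))%:Z)%R.
have zp : forall q, q <= p -> (\sum_(0 <= r < 4*q) G r = 0)%R.
  elim=> [|q IH] hq; first by rewrite big_geq.
  rewrite (big_cat_nat _ (n:=4*q)) //=; last by lia.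
  rewrite IH; last by lia.
  rewrite (_ : 4 * q.+1 = 4*q+4); last by lia.
  rewrite sum4 add0r /G.
  have hq' : q < p by lia.
  rewrite !epsZ ?sgwZ ?absvZ; try lia.
  rewrite ?mod4 ?mod40 //=.
  have := hz q hq'; have := fb (4*q); have := fb (4*q+1)%N;
    have := fb (4*q+2)%N; have := fb (4*q+3)%N.
  lia.
rewrite (big_cat_nat _ (n:=4 * p)) //=; last by lia.
rewrite zp // add0r sum6 /G.
have e0 := @epsS p 0 isT; have s0 := @sgwS p 0 isT.
have a0 := @absvS n p 0 (f (4 * p)) isT.
rewrite addn0 in e0 s0 a0; rewrite e0 s0 a0.
rewrite !epsS ?sgwS ?absvS //=.
have := fb (4 * p); have := fb (4 * p+1)%N; have := fb (4 * p+2)%N;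
 have := fb (4 * p+3)%N; have := fb (4 * p+4)%N; have := fb (4 * p+5)%N.
lia.
Qed.


Definition jrow (n k r i : nat) := (i + n - tt k r) %% n.
Definition val (n k r i : nat) : int :=
  (eps k r * sgw k r * (absv n k r (jrow n k r i))%:Z)%R.
Definition hcol (n k r i : nat) := (i + dg k r) %% n.
Definition harr (n k : nat) : parray n := fun i c =>
  match [pick r : 'I_k | hcol n k r i == c] with
  | Some r => Some (val n k r i) | None => None end.
Arguments harr : clear implicits.

Lemma tt_le k r : tt k r <= 4.
Proof.
rewrite /tt; case: ifP => _.
  by case: (r - (k-6)) => [|[|[|[|[|[|?]]]]]] //=; rewrite nth_nil.
by case: (r %% 4) => [|[|[|[|?]]]] //=; rewrite nth_nil.
Qed.

Lemma dg_le k r : r < k -> dg k r <= k.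
Proof. by rewrite /dg; case: eqP => // _ /ltnW. Qed.

Lemma dg_inj k r r' : r < k -> r' < k -> dg k r = dg k r' -> r = r'.
Proof. rewrite /dg; do 2 case: eqP; lia. Qed.

Lemma inv1 n j t : j < n -> t <= n -> ((j + t) %% n + n - t) %% n = j.
Proof.
move=> hj ht; rewrite -addnBA // modnDml -addnA subnKC // modnDr modn_small //.
Qed.

Lemma inv2 n i t : i < n -> t <= n -> ((i + n - t) %% n + t) %% n = i.
Proof.
move=> hi ht; rewrite modnDml subnK; last by lia.
by rewrite modnDr modn_small.
Qed.

Lemma colj n c d t : c < n -> d <= n -> t <= n ->
  ((c + n - d) %% n + n - t) %% n = (c + 2*n - (d + t)) %% n.
Proof.
move=> hc hd ht; rewrite -addnBA // modnDml; congr (_ %% _); lia.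
Qed.

Lemma hcol_inj n k r r' i : k < n -> r < k -> r' < k ->
  hcol n k r i = hcol n k r' i -> r = r'.
Proof.
move=> hkn hr hr' /eqP; rewrite /hcol eqn_modDl !modn_small.
- by move/eqP; apply: dg_inj.
- by apply: leq_ltn_trans (dg_le hr') hkn.
- by apply: leq_ltn_trans (dg_le hr) hkn.
Qed.

Lemma sum_pickZ n k i (c : nat) (F : 'I_k -> int) : k < n ->
  (\sum_(r < k) (if hcol n k r i == c then F r else 0) =
   match [pick r : 'I_k | hcol n k r i == c] with Some r => F r | None => 0 end)%R.
Proof.
move=> hkn; case: pickP => [r Hr | H0].
  rewrite (bigD1 r) //= Hr big1 ?addr0 // => r' Hr'.
  case: ifP => // H; exfalso; move/eqP: Hr'; apply; apply: val_inj.
  apply: (hcol_inj (i:=i) hkn (ltn_ord r') (ltn_ord r)); by rewrite (eqP H) (eqP Hr).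
by rewrite big1 // => r _; rewrite H0.
Qed.

Lemma sum_pickN n k i (c : nat) (F : 'I_k -> nat) : k < n ->
  \sum_(r < k) (if hcol n k r i == c then F r else 0) =
   match [pick r : 'I_k | hcol n k r i == c] with Some r => F r | None => 0 end.
Proof.
move=> hkn; case: pickP => [r Hr | H0].
  rewrite (bigD1 r) //= Hr big1 ?addn0 // => r' Hr'.
  case: ifP => // H; exfalso; move/eqP: Hr'; apply; apply: val_inj.
  apply: (hcol_inj (i:=i) hkn (ltn_ord r') (ltn_ord r)); by rewrite (eqP H) (eqP Hr).
by rewrite big1 // => r _; rewrite H0.
Qed.

Lemma sum_indZ n x (v : int) : x < n ->
  (\sum_(c < n) (if x == c then v else 0) = v)%R.
Proof.
move=> hx; rewrite -big_mkcond (eq_bigl (fun c : 'I_n => (c : nat) == x)).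
  by rewrite big_ord1_eq hx.
by move=> c; rewrite eq_sym.
Qed.

Lemma sum_indN n x (v : nat) : x < n ->
  \sum_(c < n) (if x == c then v else 0) = v.
Proof.
move=> hx; rewrite -big_mkcond (eq_bigl (fun c : 'I_n => (c : nat) == x)).
  by rewrite big_ord1_eq hx.
by move=> c; rewrite eq_sym.
Qed.


Lemma entryE n k (i c : 'I_n) : k < n ->
  entry (harr n k) i c = (\sum_(r < k) (if hcol n k r i == c then val n k r i else 0))%R.
Proof. by move=> hkn; rewrite /entry /harr sum_pickZ //; case: pickP. Qed.

Lemma hcol_eq n d i c : i < n -> c < n -> d <= n ->
  ((i + d) %% n == c) = ((c + n - d) %% n == i).
Proof.
move=> hi hc hd; apply/eqP/eqP => h.
  by rewrite -h inv1.
by rewrite -h inv2.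
Qed.

Lemma rowsum n p (i : 'I_n) : 4* p+6 < n ->
  (\sum_(c < n) entry (harr n (4* p+6)) i c = (2*n*(4* p+6)+1)%:Z)%R.
Proof.
move=> hkn; have n0 : 0 < n by lia.
under eq_bigr do rewrite entryE //.
rewrite exchange_big /=.
under eq_bigr => r _ do rewrite sum_indZ ?ltn_pmod //.
rewrite -(big_mkord (fun _ => true) (fun r => val n (4 * p + 6) r i)) /val.
apply: (sumG (f := fun r => jrow n (4* p+6) r i)).
- by move=> r; rewrite /jrow ltn_pmod.
- move=> q hq.
  have h0 : 4 * q < 4 * p by lia.
  have h1 : 4 * q + 1 < 4 * p by lia.
  have h2 : 4 * q + 2 < 4 * p by lia.
  have h3 : 4 * q + 3 < 4 * p by lia.
  rewrite /jrow (ttZ h0) (ttZ h1) (ttZ h2) (ttZ h3).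
  by rewrite ?mod4 ?mod40.
have t0 := @ttS p 0 isT; rewrite addn0 in t0.
by rewrite /jrow t0 !ttS.
Qed.

Lemma sum_indZF n x (F : nat -> int) : x < n ->
  (\sum_(c < n) (if x == c then F c else 0) = F x)%R.
Proof.
move=> hx; rewrite (eq_bigr (fun c : 'I_n => if x == c then F x else 0)).
  by rewrite sum_indZ.
by move=> c _; case: eqP => // ->.
Qed.

Lemma modeq n a b : a = b -> a %% n = b %% n. Proof. by move->. Qed.

Lemma colsum n p (c : 'I_n) : 4 * p + 6 < n ->
  (\sum_(i < n) entry (harr n (4 * p + 6)) i c = (2 * n * (4 * p + 6) + 1)%:Z)%R.
Proof.
move=> hkn; have n0 : 0 < n by lia.
under eq_bigr do rewrite entryE //.
rewrite exchange_big /=.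
rewrite (eq_bigr (fun r : 'I_(4 * p + 6) => val n (4 * p + 6) r ((c + n - dg (4 * p + 6) r) %% n))); last first.
  move=> r _.
  have hd : dg (4 * p + 6) r <= n by apply: leq_trans (dg_le (ltn_ord r)) (ltnW hkn).
  under eq_bigr => i _ do rewrite /hcol hcol_eq //.
  by rewrite sum_indZF ?ltn_pmod.
rewrite -(big_mkord (fun _ => true) (fun r => val n (4 * p + 6) r ((c + n - dg (4 * p + 6) r) %% n))) /val.
have key : forall r, r < 4 * p + 6 -> jrow n (4 * p + 6) r ((c + n - dg (4 * p + 6) r) %% n)
   = (c + 2 * n - (dg (4 * p + 6) r + tt (4 * p + 6) r)) %% n.
  move=> r hr; rewrite /jrow colj //.
  - by apply: leq_trans (dg_le hr) (ltnW hkn).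
  - by apply: leq_trans (tt_le _ _) _; lia.
apply: (sumG (f := fun r => jrow n (4 * p + 6) r ((c + n - dg (4 * p + 6) r) %% n))).
- by move=> r; rewrite /jrow ltn_pmod.
- move=> q hq /=.
  have h0 : 4 * q < 4 * p + 6 by lia.
  have h1 : 4 * q + 1 < 4 * p + 6 by lia.
  have h2 : 4 * q + 2 < 4 * p + 6 by lia.
  have h3 : 4 * q + 3 < 4 * p + 6 by lia.
  rewrite (key _ h0) (key _ h1) (key _ h2) (key _ h3).
  have g0 : 4 * q < 4 * p by lia.
  have g1 : 4 * q + 1 < 4 * p by lia.
  have g2 : 4 * q + 2 < 4 * p by lia.
  have g3 : 4 * q + 3 < 4 * p by lia.
  rewrite (dgZ g0) (dgZ g1) (dgZ g2) (dgZ g3) (ttZ g0) (ttZ g1) (ttZ g2) (ttZ g3).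
  rewrite ?mod4 ?mod40 //= !addn0 (_ : 4 * q + 1 + 2 = 4 * q + 3); last by lia.
  by rewrite addnC.
have h0 : 4 * p < 4 * p + 6 by lia.
have h1 : 4 * p + 1 < 4 * p + 6 by lia.
have h2 : 4 * p + 2 < 4 * p + 6 by lia.
have h3 : 4 * p + 3 < 4 * p + 6 by lia.
have h4 : 4 * p + 4 < 4 * p + 6 by lia.
have h5 : 4 * p + 5 < 4 * p + 6 by lia.
rewrite (key _ h0) (key _ h1) (key _ h2) (key _ h3) (key _ h4) (key _ h5).
have t0 := @ttS p 0 isT; have d0 := @dgS p 0 isT; rewrite addn0 in t0 d0.
rewrite t0 d0 !ttS ?dgS //= !addn0.
rewrite (_ : 4 * p + 2 + 3 = 4 * p + 1 + 4); last by lia.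
rewrite (_ : 4 * p + 3 + 3 = 4 * p + 6); last by lia.
rewrite [RHS]addnC addnA; congr (_ + _); by rewrite addnC.
Qed.


Lemma rowcard n k (i : 'I_n) : k < n -> #|[set c | filled (harr n k) i c]| = k.
Proof.
move=> hkn; have n0 : 0 < n by lia.
rewrite -sum1_card big_mkcond /=.
rewrite (eq_bigr (fun c : 'I_n => \sum_(r < k) (if hcol n k r i == c then 1 else 0))); last first.
  move=> c _; rewrite inE sum_pickN // /filled /harr.
  by case: pickP.
rewrite exchange_big /=.
rewrite (eq_bigr (fun r => 1)); last by move=> r _; rewrite sum_indN ?ltn_pmod.
by rewrite big_const_ord iter_addn_0 mul1n.
Qed.

Lemma colcard n k (c : 'I_n) : k < n -> #|[set i | filled (harr n k) i c]| = k.
Proof.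
move=> hkn; have n0 : 0 < n by lia.
rewrite -sum1_card big_mkcond /=.
rewrite (eq_bigr (fun i : 'I_n => \sum_(r < k) (if hcol n k r i == c then 1 else 0))); last first.
  move=> i _; rewrite inE sum_pickN // /filled /harr.
  by case: pickP.
rewrite exchange_big /=.
rewrite (eq_bigr (fun r => 1)); last first.
  move=> r _.
  have hd : dg k r <= n by apply: leq_trans (dg_le (ltn_ord r)) (ltnW hkn).
  rewrite (eq_bigr (fun i : 'I_n => if (c + n - dg k r) %% n == i then 1 else 0)).
    by rewrite sum_indN ?ltn_pmod.
  by move=> i _; rewrite /hcol hcol_eq.
by rewrite big_const_ord iter_addn_0 mul1n.
Qed.


Definition r0 n x := x.-1 %/ n.
Definition j0 n k x := if r0 n x == k.-1 then x.-1 - r0 n x * n else (r0 n x).+1 * n - x.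

Lemma absv_inv n k r j x : 0 < n -> j < n -> absv n k r j = x ->
  r = r0 n x /\ j = j0 n k x.
Proof.
move=> n0 hj; rewrite /absv /j0 /r0; case: eqP => hr h.
  have hx : x.-1 = r * n + j by lia.
  have hd : x.-1 %/ n = r by rewrite hx divnMDl // divn_small ?addn0.
  rewrite hd; split => //; rewrite hr eqxx; lia.
have hx : x.-1 = r * n + (n - 1 - j) by lia.
have hd : x.-1 %/ n = r by rewrite hx divnMDl // divn_small ?addn0 //; lia.
rewrite hd; split => //; case: eqP => //; lia.
Qed.

Lemma absv_ok n k x : 0 < n -> 0 < x -> x <= n * k ->
  r0 n x < k /\ j0 n k x < n /\ absv n k (r0 n x) (j0 n k x) = x.
Proof.
move=> n0 x0 xk; rewrite /absv /j0 /r0.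
have := divn_eq x.-1 n; have := ltn_pmod x.-1 n0.
have : x.-1 %/ n < k by rewrite ltn_divLR //; lia.
move: (x.-1 %/ n) (x.-1 %% n) => q rm hq hrm hx.
split => //; case: eqP => h; lia.
Qed.

Lemma eps_pm k r : r < k -> 6 <= k -> eps k r = 1%R \/ eps k r = (-1)%R.
Proof.
move=> hr hk; rewrite /eps; case: ifP => h.
  have : r - (k - 6) < 6 by lia.
  move: (r - (k - 6)) => s.
  by case: s => [|[|[|[|[|[|s]]]]]] hs //=; first [by left | by right].
have : r %% 4 < 4 by lia.
move: (r %% 4) => s.
by case: s => [|[|[|[|s]]]] hs //=; first [by left | by right].
Qed.

Lemma pm (s : int) (a x : nat) : s = 1%R \/ s = (-1)%R ->
  ((Some (s * a%:Z) == Some x%:Z) || (Some (s * a%:Z) == Some (- x%:Z)))%R = (a == x).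
Proof.
case=> ->; rewrite ?mul1r ?mulN1r !(inj_eq (@Some_inj _)).
  apply/idP/idP => [/orP[] /eqP h | /eqP h]; [apply/eqP; lia | apply/eqP; lia | ].
  by apply/orP; left; apply/eqP; rewrite h.
apply/idP/idP => [/orP[] /eqP h | /eqP h]; [apply/eqP; lia | apply/eqP; lia | ].
by apply/orP; right; apply/eqP; rewrite h.
Qed.

Lemma cover n k x : k < n -> 6 <= k -> 1 <= x <= n * k ->
  #|[set ij : 'I_n * 'I_n | (harr n k ij.1 ij.2 == Some x%:Z)%R
       || (harr n k ij.1 ij.2 == Some (- x%:Z))%R]| = 1.
Proof.
move=> hkn hk /andP[x1 xk]; have n0 : 0 < n by lia.
have [hr [hj ha]] := @absv_ok n k x n0 x1 xk.
have htn : forall r, tt k r <= n by move=> r; apply: leq_trans (tt_le k r) _; lia.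
pose I0 : 'I_n := Ordinal (ltn_pmod (j0 n k x + tt k (r0 n x)) n0).
pose C0 : 'I_n := Ordinal (ltn_pmod (I0 + dg k (r0 n x)) n0).
rewrite (_ : [set ij | _] = [set (I0, C0)]) ?cards1 //.
apply/setP => [[i c]]; rewrite !inE /= xpair_eqE -!val_eqE /=.
rewrite /harr; case: pickP => [r /eqP Hr | Hn].
  rewrite /val pm; last first.
    have := eps_pm (ltn_ord r) hk; rewrite /sgw; case: eqP => _ [] ->;
      rewrite ?mulr1 ?mulrN1 ?opprK; by [left | right].
  apply/idP/idP.
    move/eqP => h; have [er ej] := absv_inv n0 (ltn_pmod _ n0) h.
    have hi : (j0 n k x + tt k (r0 n x)) %% n = i by rewrite -ej -er /jrow inv2.
    by rewrite hi eqxx /= -Hr /hcol -er.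
  case/andP => /eqP hi /eqP hc.
  have er : (r : nat) = r0 n x.
    apply: (hcol_inj (i:=i) hkn (ltn_ord r) hr).
    by rewrite Hr hc /hcol hi.
  by rewrite er hi /jrow inv1 // ha.
rewrite /=; apply/esym/negP => /andP[/eqP hi /eqP hc].
by move: (Hn (Ordinal hr)); rewrite /hcol /= hi hc eqxx.
Qed.


Lemma absv_pos n k r j : j < n -> 0 < absv n k r j.
Proof. by move=> hj; rewrite /absv; case: eqP => _; lia. Qed.

Unset Implicit Arguments.

Theorem theorem3p2 (n k : nat) :
  (n %% 4 == 1 \/ n %% 4 == 3) -> k %% 4 = 2 -> 6 <= k -> k < n ->
  exists A : parray n, is_heffter n k A.
Proof.
move=> _ hk4 hk6 hkn.
have [p hp] : exists p, k = 4 * p + 6 by exists ((k - 6) %/ 4); lia.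
subst k; exists (harr n (4 * p + 6)).
have n0 : 0 < n by lia.
split; [|split; [|split; [|split; [|split]]]].
- move=> i j; rewrite /harr; case: pickP => // r _.
  rewrite (inj_eq (@Some_inj _)) /val.
  have ha := absv_pos (4 * p + 6) r (ltn_pmod (i + n - tt (4 * p + 6) r) n0).
  move: (absv _ _ _ _) ha => a ha.
  rewrite /sgw; case: (_ == (4 * p + 6).-1);
    have [->|->] := eps_pm (ltn_ord r) hk6; apply/eqP; lia.
- by move=> i; apply: rowcard.
- by move=> j; apply: colcard.
- by move=> i; rewrite rowsum // modzz.
- by move=> j; rewrite colsum // modzz.
move=> x hx; apply: cover => //; lia.
Qed.
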